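(* Let $\lambda=(\lambda_1,\dots,\lambda_l)$ be a partition, $\tau(t)=s_\lambda(t)+\sum_{\lambda<\mu}\xi_\mu s_\mu(t)$ with arbitrary $\xi_\mu\in\mathbb C$, and $0\le k\le l-1$. If $\mathrm{wt}\,\alpha<N_{\lambda,k}$, then $\partial^\alpha\tau\big(\sum_{i=1}^k[x_i]\big)=0$.
   Context: For $t=(t_1,t_2,\dots)$ define $p_m(t)$ by $\exp(\sum_{m\ge1}t_mk^m)=\sum_{m\ge0}p_m(t)k^m$, $p_m=0$ for $m<0$; $s_\mu(t)=\det(p_{\mu_i-i+j}(t))_{1\le i,j\le l}$. $[x]=(x,x^2/2,\dots)$. For $\alpha=(\alpha_1,\alpha_2,\dots)$ with finitely many nonzero entries, $\partial^\alpha=\prod_i(\partial/\partial t_i)^{\alpha_i}$, $\mathrm{wt}\,\alpha=\sum_ii\alpha_i$. $N_{\lambda,k}=\lambda_{k+1}+\dots+\lambda_l$. $\lambda<\mu$ means $\lambda_i\le\mu_i$ for all $i$ and $\lambda\ne\mu$. $\tau$ is a formal series, differentiated termwise, evaluations being formal power series in the $x_i$; for $k=0$ evaluation is at $t=0$. *)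

(* Defs.v *)
From HB Require Import structures.
From mathcomp Require Import all_boot all_order all_algebra.
From mathcomp Require Import reals.
From mathcomp Require Import complex.
From mathcomp Require Import mpoly.

Set Implicit Arguments.
Unset Strict Implicit.
Unset Printing Implicit Defensive.

Import Order.TTheory GRing.Theory Num.Theory.
Local Open Scope ring_scope.

Section KP.
Variable C : fieldType.

(* Polynomials in the variables t_1, ..., t_N : the mpoly variable 'X_i
   (i : 'I_N) stands for t_(i+1). *)

(* p_m(t) : coefficient of k^m in exp(sum_{i>=1} t_i k^i).  Since the
   series in k has no constant term, only the powers n <= m of the
   exponential contribute to k^m, so the truncated sum below is exact
   (for m <= N, where t_1..t_m are all present). *)
Definition genF (N : nat) : {poly {mpoly C[N]}} :=
  \sum_(i < N) ('X_i)%:P * 'X^(i.+1).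

Definition pol_p (N m : nat) : {mpoly C[N]} :=
  (\sum_(n < m.+1) ((n`!%:R)^-1)%:MP%:P * genF N ^+ n)`_m.

Definition pol_pz (N : nat) (m : int) : {mpoly C[N]} :=
  match m with Posz n => pol_p N n | Negz _ => 0 end.

Definition schur (N : nat) (mu : seq nat) : {mpoly C[N]} :=
  \det (\matrix_(i < size mu, j < size mu)
          pol_pz N ((nth 0 mu i)%:Z - (i : nat)%:Z + (j : nat)%:Z)).

End KP.

Definition is_partition (s : seq nat) : bool :=
  sorted geq s && all (fun x => 0 < x)%N s.

Definition part_le (lam mu : seq nat) : bool :=
  all (fun i => nth 0 lam i <= nth 0 mu i)%N (iota 0 (size lam)).

(* A partition of D has at most D parts, each <= D; we enumerate them as
   D-tuples of elements of 'I_(D+1), nonincreasing, summing to D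
   (padded with zeros); [strip] recovers the partition. *)
Definition padded_part (D : nat) (m : D.-tuple 'I_D.+1) : bool :=
  sorted geq [seq val i | i <- m] && (sumn [seq val i | i <- m] == D).

Definition strip (D : nat) (m : D.-tuple 'I_D.+1) : seq nat :=
  [seq val i | i <- m & (0 < val i)%N].

Definition Nlk (lam : seq nat) (k : nat) : nat := sumn (drop k lam).

(* wt alpha = sum_i i alpha_i ; alpha_i is the exponent of d/dt_i,
   stored at index i-1 of the multi-index *)
Definition wt (N : nat) (alpha : 'X_{1..N}) : nat :=
  (\sum_(i < N) i.+1 * alpha i)%N.

Section Tau.
Variable C : fieldType.

(* the degree-D homogeneous part of
   tau = s_lambda + sum_{lambda < mu} xi_mu s_mu,
   i.e. sum over partitions mu of D with lambda <= mu of c_mu s_mu,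
   where c_lambda = 1 and c_mu = xi_mu for mu <> lambda. *)
Definition tau_part (lam : seq nat) (xi : seq nat -> C) (N D : nat)
  : {mpoly C[N]} :=
  \sum_(m : D.-tuple 'I_D.+1 | padded_part m && part_le lam (strip m))
     (if strip m == lam then 1 else xi (strip m)) *: schur C N (strip m).

(* the point t = [x_1] + ... + [x_k], i.e. t_m = sum_i x_i^m / m,
   as N polynomials in x_1..x_k (for k = 0 this is t = 0) *)
Definition miwa_pt (N k : nat) : N.-tuple {mpoly C[k]} :=
  [tuple (((j.+1)%:R)^-1)%:MP * \sum_(i < k) 'X_i ^+ j.+1 | j < N].

Definition deriv_eval (N k : nat) (alpha : 'X_{1..N}) (F : {mpoly C[N]})
  : {mpoly C[k]} :=
  (mderivm alpha F) \mPo (miwa_pt N k).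

End Tau.

(* Main.v *)
Require Import Defs.
From HB Require Import structures.
From mathcomp Require Import all_boot all_order all_algebra.
From mathcomp Require Import reals.
From mathcomp Require Import complex.
From mathcomp Require Import mpoly.
Import Order.TTheory GRing.Theory Num.Theory.
Local Open Scope ring_scope.

From mathcomp Require Import ring lra zify.
From mathcomp Require fingroup perm.

Module MA.
Import Order.TTheory GRing.Theory Num.Theory.
Local Open Scope ring_scope.
Set Implicit Arguments.
Unset Strict Implicit.
Unset Printing Implicit Defensive.

Section PartA.
Variable C : numFieldType.
Variable N : nat.

Local Notation MP := {mpoly C[N]}.
Local Notation G := (genF C N).

Definition cf (n : nat) : C := (n`!%:R)^-1.
Definition EM (M : nat) : {poly MP} := \sum_(n < M) ((cf n)%:MP)%:P * G ^+ n.

Definition G0 : {poly MP} := \sum_(i < N) ('X_i)%:P * 'X^i.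

Lemma G_eq : G = 'X * G0.
Proof.
rewrite /genF /G0 mulr_sumr; apply: eq_bigr => i _.
by rewrite exprS mulrCA.
Qed.

Lemma coef_Gn n r : (r < n)%N -> (G ^+ n)`_r = 0.
Proof. by move=> rn; rewrite G_eq exprMn coefXnM rn. Qed.

Lemma EM_coef M r : (r < M)%N -> (EM M)`_r = pol_p C N r.
Proof.
move=> rM; rewrite /pol_p; elim: M rM => // M IH.
rewrite ltnS leq_eqVlt => /orP [/eqP ->|rM] //.
rewrite /EM big_ord_recr /= coefD -/(EM M) IH // coefCM coef_Gn // mulr0 addr0.
by [].
Qed.

End PartA.

End MA.
Import MA.

Module MA2.
Import Order.TTheory GRing.Theory Num.Theory.
Local Open Scope ring_scope.
Set Implicit Arguments.
Unset Strict Implicit.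
Unset Printing Implicit Defensive.

Section PartA2.
Variable C : numFieldType.
Variable N : nat.
Local Notation MP := {mpoly C[N]}.
Local Notation G := (genF C N).
Variable j : 'I_N.
Local Notation D := (map_poly (mderiv j)).
Implicit Types p q : {poly MP}.

Lemma D_coef (p : {poly MP}) i : (D p)`_i = mderiv j p`_i.
Proof. by rewrite coef_map_id0 // mderiv0. Qed.

Lemma D_add p q : D (p + q) = D p + D q.
Proof. by apply/polyP => i; rewrite coefD !D_coef coefD mderivD. Qed.

Lemma D_sum (I : Type) (r : seq I) (P : pred I) (F : I -> {poly MP}) :
  D (\sum_(i <- r | P i) F i) = \sum_(i <- r | P i) D (F i).
Proof.
apply/polyP => i; rewrite D_coef !coef_sum raddf_sum.
by apply: eq_bigr => x _; rewrite D_coef.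
Qed.

Lemma D_mul p q : D (p * q) = D p * q + p * D q.
Proof.
apply/polyP => i; rewrite D_coef coefD !coefM raddf_sum -big_split /=.
by apply: eq_bigr => x _; rewrite mderivM !D_coef.
Qed.

Lemma D_C (c : MP) p : D (c%:P * p) = (mderiv j c)%:P * p + c%:P * D p.
Proof. by rewrite D_mul; congr (_ + _); rewrite map_polyC. Qed.

Lemma mderivXU (i : 'I_N) : mderiv j ('X_i : MP) = (i == j)%:R%:MP.
Proof.
rewrite mderivX mnm1E; case: eqP => [->|_]; last by rewrite scale0r.
have -> : (U_(j) - U_(j) = 0)%MM by apply/mnmP => k; rewrite mnmBE subnn mnm0E.
by rewrite mpolyX0 scale1r mpolyC1.
Qed.

Lemma D_Xn n : D ('X^n : {poly MP}) = 0.
Proof.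
apply/polyP => i; rewrite D_coef coefXn coef0.
by case: (i == n); rewrite ?mderiv0 // -mpolyC1 mderivC.
Qed.

Lemma DG : D G = 'X^(j.+1).
Proof.
rewrite /genF D_sum (bigD1 j) //= big1 ?addr0.
  by rewrite D_C mderivXU eqxx D_Xn mulr0 addr0 mpolyC1 mul1r.
by move=> i ij; rewrite D_C mderivXU (negbTE ij) D_Xn mulr0 addr0 mpolyC0 mul0r.
Qed.

Lemma D_Gn n : D (G ^+ n) = G ^+ n.-1 * 'X^(j.+1) *+ n.
Proof.
elim: n => [|n IH]; first by rewrite expr0 mulr0n -[1]/(1%:P) map_polyC /= -mpolyC1 mderivC.
rewrite exprS D_mul IH DG /=; case: n {IH} => [|n]; first by rewrite !expr0 mulr0n mulr0 addr0 mulr1 mul1r.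
rewrite /= !exprS; ring.
Qed.


Lemma cfS i : cf C i.+1 *+ i.+1 = cf C i.
Proof.
have h1 : (i.+1%:R : C) != 0 by rewrite pnatr_eq0.
have h2 : (i`!%:R : C) != 0 by rewrite pnatr_eq0 -lt0n fact_gt0.
rewrite /cf factS natrM; field; by rewrite h2 /= addrC natr1.
Qed.

Lemma D_EM M : D (EM C N M.+1) = 'X^(j.+1) * EM C N M.
Proof.
rewrite /EM D_sum big_ord_recl /= D_C mderivC D_Gn mulr0n mulr0 polyC0 mul0r !add0r.
rewrite mulr_sumr; apply: eq_bigr => i _.
rewrite D_C mderivC polyC0 mul0r add0r D_Gn /= /bump /= add1n.
rewrite mulrnAr -mulrnAl -polyCMn -mpolyCMn cfS.
by rewrite add0n; ring.
Qed.

Lemma mderiv_pol_p m :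
  mderiv j (pol_p C N m) = if (j < m)%N then pol_p C N (m - j.+1) else 0.
Proof.
rewrite -(@EM_coef C N m.+1 m (ltnSn m)) -D_coef D_EM coefXnM.
case: (ltnP j m) => jm.
  rewrite ltnNge jm /=; apply: EM_coef; rewrite ltn_subrL //.
  by apply: leq_ltn_trans jm.
by rewrite ltnS jm.
Qed.

Lemma pol_pzE (z : int) : pol_pz C N z = if (0 <= z) then pol_p C N `|z|%N else 0.
Proof. by case: z. Qed.

Lemma mderiv_pol_pz (z : int) :
  mderiv j (pol_pz C N z) = pol_pz C N (z - (j.+1)%:Z).
Proof.
rewrite !pol_pzE; case: (lerP 0 z) => hz; last first.
  by rewrite mderiv0 ifF //; apply/negbTE; rewrite -ltNge; lia.
have [m ->] : exists m : nat, z = m by exists `|z|%N; rewrite gez0_abs.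
rewrite mderiv_pol_p absz_nat; case: (ltnP j m) => jm.
  rewrite ifT; last by lia.
  by rewrite subzn.
by rewrite ifF //; apply/negbTE; rewrite -ltNge; lia.
Qed.

End PartA2.

End MA2.
Import MA2.

Module MA3.
Import Order.TTheory GRing.Theory Num.Theory.
Local Open Scope ring_scope.
Set Implicit Arguments.
Unset Strict Implicit.
Unset Printing Implicit Defensive.

Section PartA3.
Variable C : numFieldType.
Variables N k : nat.
Local Notation MP := {mpoly C[N]}.
Local Notation MK := {mpoly C[k]}.
Local Notation G := (genF C N).
Local Notation phi := (comp_mpoly (miwa_pt C N k)).
Local Notation PK := {poly MK}.

Definition Ghat : PK := map_poly phi G.
Definition Qp : PK := map_poly phi (EM C N N.+1).
Definition QN : PK := \sum_(n < N) ((cf C n)%:MP)%:P * Ghat ^+ n.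
Definition Ghat0 : PK := map_poly phi (G0 C N).

Lemma Q_eq : Qp = QN + ((cf C N)%:MP)%:P * Ghat ^+ N.
Proof.
rewrite /Qp /EM rmorph_sum big_ord_recr /=; congr (_ + _).
  by apply: eq_bigr => i _; rewrite rmorphM rmorphXn /= map_polyC /= comp_mpolyC.
by rewrite rmorphM rmorphXn /= map_polyC /= comp_mpolyC.
Qed.

Lemma Ghat_eq : Ghat = 'X * Ghat0.
Proof. by rewrite /Ghat /Ghat0 G_eq rmorphM /= map_polyX. Qed.

Lemma phiX (j : 'I_N) : phi 'X_j = ((j.+1)%:R^-1)%:MP * \sum_(i < k) 'X_i ^+ j.+1.
Proof. by rewrite comp_mpolyXU -tnth_nth tnth_mktuple. Qed.

Definition gi (i : 'I_k) : PK := \sum_(j < N) ('X_i ^+ j.+1)%:P * 'X^j.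

Lemma dGhat : Ghat^`() = \sum_(i < k) gi i.
Proof.
rewrite /Ghat /genF rmorph_sum raddf_sum /= /gi exchange_big /=.
apply: eq_bigr => j _; rewrite rmorphM /= map_polyC /= map_polyXn phiX.
rewrite deriv_mulC derivXn /=.
rewrite mulrnAr -mulrnAl -polyCMn.
have -> : ((j.+1)%:R^-1 : C)%:MP * (\sum_(i < k) 'X_i ^+ j.+1) *+ j.+1 = \sum_(i < k) 'X_i ^+ j.+1.
  rewrite -mulrnAl -rmorphMn /= -mulr_natr mulVf ?pnatr_eq0 // mpolyC1 mul1r //.
rewrite rmorph_sum mulr_suml; by apply: eq_bigr.
Qed.

Definition Ek : PK := \prod_(i < k) (1 - ('X_i)%:P * 'X).

Lemma telesc (x : MK) n :
  (1 - x%:P * 'X) * (\sum_(j < n) (x ^+ j.+1)%:P * 'X^j) = x%:P - (x ^+ n.+1)%:P * 'X^n.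
Proof.
elim: n => [|n IH]; first by rewrite big_ord0 mulr0 expr1 expr0 mulr1 subrr.
rewrite big_ord_recr /= mulrDr IH !rmorphXn /= !exprS; ring.
Qed.

Lemma single_fac (x : MK) :
  (1 - x%:P * 'X)^`() + (1 - x%:P * 'X) * (\sum_(j < N) (x ^+ j.+1)%:P * 'X^j)
  = 'X^N * (- (x ^+ N.+1)%:P).
Proof.
rewrite telesc derivB derivC deriv_mulC derivX sub0r mulr1; ring.
Qed.

Lemma Ek_rel : exists R : PK, Ek^`() + Ek * Ghat^`() = 'X^N * R.
Proof.
rewrite dGhat /Ek.
apply: (big_rec2 (fun E g => exists R : PK, E^`() + E * g = 'X^N * R)).
  by exists 0; rewrite derivC mulr0 addr0 mulr0.
move=> i E g _ [R HR]; exists ((1 - ('X_i)%:P * 'X) * R + E * (- ('X_i ^+ N.+1)%:P)).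
have := single_fac 'X_i; rewrite /gi => HS.
rewrite derivM.
transitivity ((1 - ('X_i)%:P * 'X) * (E^`() + E * g) +
   E * ((1 - ('X_i)%:P * 'X)^`() + (1 - ('X_i)%:P * 'X) * (\sum_(j < N) ('X_i ^+ j.+1)%:P * 'X^j))).
  ring.
rewrite HR HS; ring.
Qed.

Lemma Qp_sum : Qp = \sum_(n < N.+1) ((cf C n)%:MP)%:P * Ghat ^+ n.
Proof.
rewrite /Qp /EM rmorph_sum; apply: eq_bigr => i _.
by rewrite rmorphM rmorphXn /= map_polyC /= comp_mpolyC.
Qed.

Lemma dQ : Qp^`() = Ghat^`() * QN.
Proof.
rewrite Qp_sum raddf_sum big_ord_recl /= deriv_mulC deriv_exp mulr0n mulr0 add0r.
rewrite /QN mulr_sumr; apply: eq_bigr => i _.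
rewrite deriv_mulC deriv_exp /= /bump /= add1n.
rewrite mulrnAr -mulrnAl -polyCMn -rmorphMn /= cfS; ring.
Qed.

Lemma EQ_rel : exists T : PK, (Ek * Qp)^`() = 'X^N * T.
Proof.
have [R HR] := Ek_rel.
exists (R * Qp - Ek * Ghat^`() * ((cf C N)%:MP)%:P * Ghat0 ^+ N).
rewrite derivM dQ.
have -> : QN = Qp - ((cf C N)%:MP)%:P * Ghat ^+ N by rewrite Q_eq; ring.
transitivity ((Ek^`() + Ek * Ghat^`()) * Qp - Ek * Ghat^`() * ((cf C N)%:MP)%:P * Ghat ^+ N).
  ring.
rewrite HR Ghat_eq exprMn; ring.
Qed.

Lemma nat_mul_eq0 (x : MK) n : x *+ n.+1 = 0 -> x = 0.
Proof.
rewrite -mulr_natr -mpolyC_nat => /eqP; rewrite mulf_eq0 mpolyC_eq0 pnatr_eq0 orbF.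
by move/eqP.
Qed.

Lemma EQ_coef r : (0 < r <= N)%N -> (Ek * Qp)`_r = 0.
Proof.
case: r => // r /= rN.
have [T HT] := EQ_rel.
have := coef_deriv (Ek * Qp) r; rewrite HT coefXnM rN => /esym.
exact: nat_mul_eq0.
Qed.

Lemma Ek0 : Ek`_0 = 1.
Proof.
rewrite /Ek; apply: (big_ind (fun p : PK => p`_0 = 1)).
- by rewrite coefC.
- by move=> p q hp hq; rewrite coef0M hp hq mulr1.
- by move=> i _; rewrite coefB coefC coefCM coefX mulr0 subr0.
Qed.

Lemma size_fac (x : MK) : (size (1 - x%:P * 'X)%R <= 2)%N.
Proof.
apply: leq_trans (size_add _ _) _; rewrite size_poly1 size_opp geq_max /=.
apply: leq_trans (size_mul_leq _ _) _; rewrite size_polyX.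
have := size_polyC_leq1 x; lia.
Qed.

Lemma size_prod_fac (s : seq 'I_k) :
  (size (\prod_(i <- s) (1 - ('X_i : MK)%:P * 'X))%R <= (size s).+1)%N.
Proof.
elim: s => [|i s IH]; first by rewrite big_nil size_poly1.
rewrite big_cons; apply: leq_trans (size_mul_leq _ _) _.
have := size_fac 'X_i; move: IH => /=; lia.
Qed.

Lemma size_Ek : (size Ek <= k.+1)%N.
Proof.
have := size_prod_fac (index_enum 'I_k).
by rewrite /Ek /index_enum -enumT size_enum_ord.
Qed.

Lemma Ek_coef_big s : (k < s)%N -> Ek`_s = 0.
Proof. move=> ks; apply: nth_default; apply: leq_trans size_Ek ks. Qed.

End PartA3.

End MA3.
Import MA3.

Module MA4.
Import Order.TTheory GRing.Theory Num.Theory.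
Local Open Scope ring_scope.
Set Implicit Arguments.
Unset Strict Implicit.
Unset Printing Implicit Defensive.

Lemma sum_widen (V : nmodType) m M (F : nat -> V) : (m <= M)%N ->
  (forall s, (m <= s < M)%N -> F s = 0) ->
  \sum_(s < m) F s = \sum_(s < M) F s.
Proof.
move=> mM H; rewrite -!(big_mkord xpredT) (big_cat_nat (leq0n m) mM) /=.
rewrite [X in _ = _ + X]big1_seq ?addr0 // => i /andP [_].
by rewrite mem_index_iota; apply: H.
Qed.

Section PartA4.
Variable C : numFieldType.
Variables N k : nat.
Local Notation MK := {mpoly C[k]}.
Local Notation PK := {poly MK}.

Definition qz (z : int) : MK := if z is Posz n then (Qp C N k)`_n else 0.

Lemma qz_neg (z : int) : z < 0 -> qz z = 0.
Proof. by case: z. Qed.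

Lemma qz_rec (r : int) : 1 <= r <= N%:Z ->
  \sum_(s < k.+1) (Ek C k)`_s * qz (r - s%:Z) = 0.
Proof.
case: r => // n; rewrite !lez_nat => /andP [n1 nN].
rewrite -[RHS](@EQ_coef C N k n); last by rewrite n1 nN.
rewrite coefM.
rewrite (@sum_widen _ k.+1 (n + k).+1 (fun s => (Ek C k)`_s * qz (n%:Z - s%:Z))); last 2 first.
- lia.
- by move=> s /andP [ks _]; rewrite Ek_coef_big ?mul0r.
rewrite [RHS](eq_bigr (fun s : 'I_n.+1 => (Ek C k)`_s * qz (n%:Z - s%:Z))); last first.
  by move=> s _; rewrite subzn // -ltnS.
rewrite (@sum_widen _ n.+1 (n + k).+1 (fun s => (Ek C k)`_s * qz (n%:Z - s%:Z))) //; last 2 first.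
- lia.
- by move=> s /andP [ns _]; rewrite qz_neg ?mulr0 //; lia.
Qed.

Variable l : nat.
Definition vrow (c : int) : 'rV[MK]_l := \row_(j < l) qz (c + (j : nat)%:Z).
Definition Wm : 'M[MK]_(k, l) := \matrix_(s < k, j < l) qz (- (s : nat)%:Z + (j : nat)%:Z).

Lemma qz_rec1 (r : int) : 1 <= r <= N%:Z ->
  qz r = - \sum_(s < k) (Ek C k)`_s.+1 * qz (r - (s.+1)%:Z).
Proof.
move=> hr; have := qz_rec hr; rewrite big_ord_recl /= Ek0 mul1r subr0 => /eqP.
by rewrite addr_eq0 => /eqP ->.
Qed.

Lemma rowspan (n : nat) (c : int) : 1 - k%:Z <= c -> c < n%:Z + 1 - k%:Z ->
  c + l%:Z <= N%:Z + 1 -> exists u : 'rV[MK]_k, vrow c = u *m Wm.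
Proof.
elim: n c => [|n IH] c h1 h2 h3; first by lia.
case: (lerP c 0) => hc.
  have e : (`|c|%N : int) = - c by rewrite lez0_abs.
  have sk : (`|c|%N < k)%N by rewrite -ltz_nat e; lia.
  exists (delta_mx 0 (Ordinal sk)); rewrite -rowE; apply/rowP => j.
  rewrite !mxE /=; congr qz; by rewrite e opprK.
have: forall s : 'I_k, exists u : 'rV[MK]_k, vrow (c - (s.+1)%:Z) = u *m Wm.
  move=> s; have := ltn_ord s; move=> hs; apply: IH; lia.
case/fin_all_exists => U HU.
exists (- \sum_(s < k) (Ek C k)`_s.+1 *: U s).
rewrite mulNmx mulmx_suml; apply/rowP => j.
have hj := ltn_ord j; rewrite !mxE (qz_rec1); last by lia.
congr (- _); rewrite summxE; apply: eq_bigr => s _.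
rewrite -scalemxAl -HU !mxE; congr (_ * qz _); lia.
Qed.

End PartA4.

End MA4.
Import MA4.

Module MA5.
Import Order.TTheory GRing.Theory Num.Theory.
Local Open Scope ring_scope.
Set Implicit Arguments.
Unset Strict Implicit.
Unset Printing Implicit Defensive.

Section PartA5.
Variable C : numFieldType.
Variables N k l : nat.
Local Notation MK := {mpoly C[k]}.
Local Notation FK := {fraction MK}.
Local Notation tf := (@tofrac MK).

Variable c : nat -> int.
Definition Mq : 'M[MK]_l := \matrix_(i < l, j < l) qz C N k (c i + (j : nat)%:Z).
Definition Tset : {set 'I_l} := [set i : 'I_l | 1 - k%:Z <= c i].

Hypothesis hT : (k < #|Tset|)%N.
Hypothesis hN : forall i : 'I_l, i \in Tset -> c i + l%:Z <= N%:Z + 1.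

Lemma det_Mq : \det Mq = 0.
Proof.
pose f (x : 'I_k.+1) : 'I_l := enum_val (widen_ord hT x).
have finj : injective f.
  move=> x y /enum_val_inj /(congr1 val) /= exy; exact: val_inj.
have fT x : f x \in Tset by apply: enum_valP.
have : forall x : 'I_k.+1, exists u : 'rV[MK]_k, vrow C N k l (c (f x)) = u *m Wm C N k l.
  move=> x; have := fT x; rewrite inE => h1.
  have h3 := hN (fT x).
  apply: (@rowspan C N k l (`|c (f x)| + k)%N) => //.
  have := abszE (c (f x)); have := ler_norm (c (f x)); lia.
case/fin_all_exists => U HU.
pose Um : 'M[MK]_(k.+1, k) := \matrix_(x, s) U x 0 s.
have Hsub : rowsub f Mq = Um *m Wm C N k l.
  apply/matrixP => x j; rewrite !mxE.
  have := congr1 (fun v : 'rV[MK]_l => v 0 j) (HU x); rewrite /= !mxE => ->.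
  by apply: eq_bigr => s _; rewrite !mxE.
pose M' := map_mx tf Mq; pose U' := map_mx tf Um; pose W' := map_mx tf (Wm C N k l).
have Hsub' : rowsub f M' = U' *m W'.
  by rewrite -map_mxM -Hsub; apply/matrixP => x j; rewrite !mxE.
pose K := kermx U'.
have : K != 0.
  rewrite -mxrank_eq0 mxrank_ker; have := rank_leq_col U'; lia.
move=> Knz.
have [x0 [j0 Kx0]] : exists x0 j0, K x0 j0 != 0.
  case: (pickP (fun xj : 'I_k.+1 * 'I_k.+1 => K xj.1 xj.2 != 0)) => [[x0 j0] h|h].
    by exists x0, j0.
  case/negP: Knz; apply/eqP/matrixP => x y.
  move: (h (x, y)) => /= /negbFE /eqP ->; by rewrite mxE.
pose u' := row x0 K.
have u'U : u' *m U' = 0 by rewrite -row_mul mulmx_ker row0.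
pose u := u' *m rowsub f 1%:M.
have uM : u *m M' = 0 by rewrite -mulmxA -rowsubE Hsub' mulmxA u'U mul0mx.
have unz : u 0 (f j0) != 0.
  rewrite /u mxE (bigD1 j0) //= big1 ?addr0.
    rewrite mxE [X in _ * X]mxE.
    have -> : (1%:M : 'M[FK]_l) (f j0) (f j0) = 1 by rewrite !mxE eqxx.
    by rewrite mulr1.
  move=> x xj; rewrite mxE [X in _ * X]mxE.
  have -> : (1%:M : 'M[FK]_l) (f x) (f j0) = 0 by rewrite !mxE (inj_eq finj) (negbTE xj).
  by rewrite mulr0.
have detM' : \det M' = 0.
  case: (boolP (\det M' == 0)) => [/eqP //|hd].
  have Mu : M' \in unitmx.
    rewrite unitmxE; move: hd; rewrite -unitfE; exact.
  have u0 : u = 0 by rewrite -(mulmxK Mu u) uM mul0mx.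
  by move: unz; rewrite u0 [X in X != _]mxE eqxx.
move: detM'; rewrite det_map_mx => /eqP; rewrite tofrac_eq0 => /eqP //.
Qed.
End PartA5.

End MA5.
Import MA5.

Module MB1.
Import Order.TTheory GRing.Theory Num.Theory.
Local Close Scope ring_scope.
Set Implicit Arguments.
Unset Strict Implicit.
Unset Printing Implicit Defensive.

Lemma path_nth_ge (s : seq nat) x : path ltn x s ->
  forall j, (j < size s)%N -> (x + j.+1 <= nth 0 s j)%N.
Proof.
elim: s x => [|y s IH] x //= /andP [xy ps] [|j] /=; first by rewrite addn1.
move=> js; have := IH y ps j js; lia.
Qed.

Lemma sorted_nth_ge (s : seq nat) : sorted ltn s ->
  forall j, (j < size s)%N -> (j <= nth 0 s j)%N.
Proof.
case: s => [|y s] //= ps [|j] //= js; have := path_nth_ge ps js; lia.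
Qed.

Lemma sorted_sort_ltn (s : seq nat) : uniq s -> sorted ltn (sort leq s).
Proof.
move=> us; rewrite ltn_sorted_uniq_leq sort_uniq us /=.
apply: sort_sorted; exact: leq_total.
Qed.

Lemma sum_uniq_ge (s : seq nat) : uniq s ->
  (\sum_(j < size s) j <= \sum_(x <- s) x)%N.
Proof.
move=> us; have ps : perm_eq (sort leq s) s by rewrite perm_sort perm_refl.
rewrite -(perm_big _ ps) /=.
rewrite -(size_sort leq s) (big_nth 0) big_mkord.
apply: leq_sum => j _; exact: sorted_nth_ge (sorted_sort_ltn us) _ _.
Qed.

Lemma sum_uniq_mu (mu : nat -> nat) (s : seq nat) : uniq s ->
  (forall i j, (i <= j)%N -> (mu j <= mu i)%N) ->
  (\sum_(x <- s) mu x <= \sum_(j < size s) mu j)%N.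
Proof.
move=> us hmu; have ps : perm_eq (sort leq s) s by rewrite perm_sort perm_refl.
rewrite -(perm_big _ ps) /=.
rewrite -(size_sort leq s) (big_nth 0) big_mkord.
apply: leq_sum => j _; apply: hmu; exact: sorted_nth_ge (sorted_sort_ltn us) _ _.
Qed.

Local Open Scope ring_scope.

Lemma Posz_sum (I : Type) (r : seq I) (P : pred I) (F : I -> nat) :
  ((\sum_(i <- r | P i) F i)%N)%:Z = \sum_(i <- r | P i) (F i)%:Z.
Proof. exact: (big_morph Posz PoszD (erefl 0%:Z)). Qed.

Lemma tri_sum s n : (\sum_(j < s + n) j = \sum_(j < s) j + \sum_(j < n) j + s * n)%N.
Proof.
elim: n => [|n IH]; first by rewrite big_ord0 muln0 !addn0.
rewrite addnS !big_ord_recr /= IH mulnS.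
set A := (\sum_(j < s) j)%N; set B := (\sum_(j < n) j)%N; lia.
Qed.

Lemma sum_ord_le (mu : nat -> nat) a b : (a <= b)%N ->
  (\sum_(j < a) mu j <= \sum_(j < b) mu j)%N.
Proof.
move=> ab; rewrite -!(big_mkord xpredT) (big_cat_nat (leq0n a) ab) /=.
exact: leq_addr.
Qed.

Section Comb.
Variables (l k : nat) (mu : nat -> nat) (c : nat -> int).
Hypothesis kl : (k <= l)%N.
Hypothesis hmu : forall i j, (i <= j)%N -> (mu j <= mu i)%N.
Hypothesis hca : forall i : 'I_l, c i <= (mu i)%:Z - (i : nat)%:Z.
Hypothesis cinj : forall i j : 'I_l, c i = c j -> i = j.
Let T := [set i : 'I_l | 1 - k%:Z <= c i].
Hypothesis hT : (#|T| <= k)%N.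

Lemma comb_bound :
  ((\sum_(k <= i < l) mu i)%N)%:Z <= \sum_(i < l) ((mu i)%:Z - (i : nat)%:Z - c i).
Proof.
set s := #|T|; set n := #|~: T|.
have sn : (s + n = l)%N by rewrite /s /n cardsC card_ord.
have e1 : \sum_(i < l) ((mu i)%:Z - (i : nat)%:Z - c i) =
   ((\sum_(i < l) mu i)%N)%:Z - ((\sum_(i < l) (i : nat))%N)%:Z
   - \sum_(i in T) c i - \sum_(i in ~: T) c i.
  rewrite !Posz_sum !sumrB [\sum_(i < l) c i](bigID (fun i => i \in T)) /= opprD addrA.
  apply: congr1; apply: congr1; apply: eq_bigl => i; by rewrite !inE.
have e2 : \sum_(i in T) c i <= ((\sum_(j < k) mu j)%N)%:Z - ((\sum_(j < s) j)%N)%:Z.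
  apply: le_trans (_ : \sum_(i in T) ((mu i)%:Z - (i : nat)%:Z) <= _).
    by apply: ler_sum => i _; apply: hca.
  rewrite sumrB -!Posz_sum lerB //.
    rewrite lez_nat; apply: leq_trans (_ : (\sum_(j < s) mu j <= _)%N); last first.
      exact: sum_ord_le.
    have := @sum_uniq_mu mu [seq val i | i <- enum T].
    rewrite map_inj_uniq ?enum_uniq //; last exact: val_inj.
    rewrite size_map -cardE big_map big_enum /=.
    by move=> /(_ isT hmu).
  rewrite lez_nat.
  have := @sum_uniq_ge [seq val i | i <- enum T].
  rewrite map_inj_uniq ?enum_uniq //; last exact: val_inj.
  by rewrite size_map -cardE big_map big_enum /= => /(_ isT).
pose t (i : 'I_l) : nat := `|- c i - k%:Z|%N.
have ct : forall i, i \in ~: T -> c i = - k%:Z - (t i)%:Z.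
  move=> i; rewrite !inE -ltNge => h; rewrite /t.
  have -> : (`|- c i - k%:Z|%N : int) = - c i - k%:Z by rewrite gez0_abs; lia.
  lia.
have e3 : \sum_(i in ~: T) c i <= - ((n * k)%N)%:Z - ((\sum_(j < n) j)%N)%:Z.
  rewrite (eq_bigr _ ct) sumrB.
  have -> : \sum_(i in ~: T) (- k%:Z) = - ((n * k)%N)%:Z.
    rewrite sumr_const -/n; elim: (n) => [|m IH]; first by rewrite mulr0n.
    by rewrite mulrS IH mulSn PoszD opprD.
  rewrite lerB // -Posz_sum lez_nat.
  have := @sum_uniq_ge [seq t i | i <- enum (~: T)].
  rewrite map_inj_in_uniq ?enum_uniq //; last first.
    move=> i j; rewrite !mem_enum => hi hj tij; apply: cinj.
    by rewrite (ct _ hi) (ct _ hj) tij.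
  by rewrite size_map -cardE big_map big_enum /= => /(_ isT).
have e4 : ((\sum_(i < l) mu i)%N)%:Z = ((\sum_(j < k) mu j)%N)%:Z + ((\sum_(k <= i < l) mu i)%N)%:Z.
  by rewrite -PoszD -!(big_mkord xpredT) -(big_cat_nat (leq0n k) kl).
have e5 := tri_sum s n; rewrite sn in e5.
rewrite e1 e4 e5.
have : (s * n <= n * k)%N by rewrite mulnC leq_mul2l hT orbT.
move: e2 e3; rewrite !PoszD; lia.
Qed.

End Comb.

End MB1.
Import MB1.

Module MB2.
Import Order.TTheory GRing.Theory Num.Theory.
Import fingroup perm.
Local Open Scope ring_scope.
Set Implicit Arguments.
Unset Strict Implicit.
Unset Printing Implicit Defensive.

Section PartB2.
Variable C : numFieldType.
Variable N : nat.
Local Notation MP := {mpoly C[N]}.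
Variable j : 'I_N.

Lemma mderiv_prod (I : eqType) (r : seq I) (F : I -> MP) : uniq r ->
  mderiv j (\prod_(i <- r) F i) =
  \sum_(i <- r) mderiv j (F i) * \prod_(i' <- r | i' != i) F i'.
Proof.
elim: r => [|x r IH] /=; first by rewrite big_nil big_nil -mpolyC1 mderivC.
case/andP => xr ur; rewrite big_cons mderivM IH // [RHS]big_cons.
congr (_ + _).
  rewrite big_cons eqxx /=; congr (_ * _).
  rewrite [RHS]big_seq_cond [LHS]big_seq_cond; apply: eq_bigl => i.
  by case: (boolP (i \in r)) => //= ir; apply/esym/negP => /eqP eix; move: xr; rewrite -eix ir.
rewrite mulr_sumr !big_seq; apply: eq_bigr => i ir.
rewrite big_cons ifT; first by rewrite mulrCA.
by apply/negP => /eqP exi; move: xr; rewrite exi ir.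
Qed.

Lemma mderiv_prod_ord (l : nat) (F : 'I_l -> MP) :
  mderiv j (\prod_(i < l) F i) = \sum_(i < l) mderiv j (F i) * \prod_(i' < l | i' != i) F i'.
Proof. exact: (mderiv_prod F (index_enum_uniq _)). Qed.

Lemma mderiv_det (l : nat) (A : 'M[MP]_l) :
  mderiv j (\det A) = \sum_(i < l) \det (\matrix_(i', j') (if i' == i then mderiv j (A i' j') else A i' j')).
Proof.
rewrite /determinant raddf_sum /=.
rewrite (eq_bigr (fun s : 'S_l => \sum_(i < l) (-1) ^+ s * (mderiv j (A i (s i)) * \prod_(i' < l | i' != i) A i' (s i')))); last first.
  move=> s _; rewrite mderivM.
  have -> : mderiv j ((-1) ^+ s : MP) = 0.
    by case: (odd_perm s); rewrite /= ?expr1 ?expr0 ?mderivN -mpolyC1 mderivC ?oppr0.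
  by rewrite mul0r add0r mderiv_prod_ord mulr_sumr.
rewrite exchange_big /=; apply: eq_bigr => i _; apply: eq_bigr => s _.
congr (_ * _); rewrite [RHS](bigD1 i) //= !mxE eqxx; congr (_ * _).
by apply: eq_bigr => i' ii; rewrite !mxE (negbTE ii).
Qed.

Definition Gm (l : nat) (c : nat -> int) : MP :=
  \det (\matrix_(i < l, j' < l) pol_pz C N (c i + (j' : nat)%:Z)).
Definition shift (c : nat -> int) (i m : nat) : nat -> int :=
  fun i' => if i' == i then c i' - m%:Z else c i'.

Lemma mderiv_Gm l c : mderiv j (Gm l c) = \sum_(i < l) Gm l (shift c i j.+1).
Proof.
rewrite /Gm mderiv_det; apply: eq_bigr => i _; congr determinant.
apply/matrixP => i' j'; rewrite !mxE /shift.
case: (i' =P i) => [->|ne]; rewrite ?eqxx.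
  by rewrite mderiv_pol_pz; congr pol_pz; lia.
have -> : ((i' : nat) == i) = false by apply/eqP => /val_inj.
by [].
Qed.

End PartB2.

End MB2.
Import MB2.

Module MB3.
Import Order.TTheory GRing.Theory Num.Theory.
Local Open Scope ring_scope.
Set Implicit Arguments.
Unset Strict Implicit.
Unset Printing Implicit Defensive.

Lemma wtD N (m1 m2 : 'X_{1..N}) : wt (m1 + m2)%MM = (wt m1 + wt m2)%N.
Proof.
rewrite /wt -big_split /=; apply: eq_bigr => i _; by rewrite mnmDE mulnDr.
Qed.

Lemma wtU N (j : 'I_N) : wt U_(j)%MM = j.+1.
Proof.
rewrite /wt (bigD1 j) //= mnm1E eqxx muln1 big1 ?addn0 //.
by move=> i ij; rewrite mnm1E eq_sym (negbTE ij) muln0.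
Qed.

Section Main.
Variable C : numFieldType.
Variables N k l : nat.
Variable mu : nat -> nat.
Hypothesis kl : (k <= l)%N.
Hypothesis hmu : forall i j, (i <= j)%N -> (mu j <= mu i)%N.
Hypothesis hbound : forall i, (i < l)%N -> (mu i + l <= N.+1)%N.
Let a (i : nat) : int := (mu i)%:Z - i%:Z.

Lemma phi_pol_pz (z : int) : z <= N%:Z ->
  pol_pz C N z \mPo miwa_pt C N k = qz C N k z.
Proof.
case: z => [n|n] hz /=; last by rewrite comp_mpoly0.
rewrite /Qp coef_map_id0 ?comp_mpoly0 // EM_coef //; lia.
Qed.

Lemma base_case (c : nat -> int) :
  (forall i : 'I_l, c i <= a i) ->
  \sum_(i < l) (a i - c i) < ((\sum_(k <= i < l) mu i)%N)%:Z ->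
  Gm C N l c \mPo miwa_pt C N k = 0.
Proof.
move=> hca hb.
have -> : Gm C N l c \mPo miwa_pt C N k = \det (Mq C N k l c).
  rewrite /Gm -det_map_mx; congr determinant; apply/matrixP => i j; rewrite !mxE.
  apply: phi_pol_pz; have := hca i; have := hbound (ltn_ord i); have := ltn_ord j.
  rewrite /a; lia.
case: (boolP (injectiveb (fun i : 'I_l => c i))) => [/injectiveP cinj|].
  apply: det_Mq => [|i _]; last first.
    have := hca i; have := hbound (ltn_ord i); rewrite /a; lia.
  rewrite ltnNge; apply/negP => hT.
  have := comb_bound kl hmu hca cinj hT.
  move: hb; rewrite /a; lia.
case/injectivePn => i1 [i2 ne e].
by apply: (determinant_alternate ne) => j; rewrite !mxE e.
Qed.

Lemma shift_sum (c : nat -> int) (i : 'I_l) m :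
  \sum_(i' < l) (a i' - shift c i m i') = \sum_(i' < l) (a i' - c i') + m%:Z.
Proof.
rewrite (bigD1 i) //= [in RHS](bigD1 i) //= /shift eqxx.
have -> : \sum_(i' < l | i' != i) (a i' - (if (i' : nat) == i then c i' - m%:Z else c i')) =
          \sum_(i' < l | i' != i) (a i' - c i').
  apply: eq_bigr => i' ne; have -> : ((i' : nat) == i) = false by apply/negbTE.
  by [].
ring.
Qed.

Lemma main_claim n : forall (alpha : 'X_{1..N}), (mdeg alpha <= n)%N ->
  forall c : nat -> int, (forall i : 'I_l, c i <= a i) ->
  \sum_(i < l) (a i - c i) + (wt alpha)%:Z < ((\sum_(k <= i < l) mu i)%N)%:Z ->
  deriv_eval k alpha (Gm C N l c) = 0.
Proof.
elim: n => [|n IH] alpha hdeg c hca hb.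
  move: hdeg; rewrite leqn0 mdeg_eq0 => /eqP ha; subst alpha.
  rewrite /deriv_eval mderivm0m; apply: base_case => //.
  have w0 : wt (0%MM : 'X_{1..N}) = 0%N by rewrite /wt big1 // => i _; rewrite mnm0E muln0.
  by move: hb; rewrite w0 addr0.
case: (pickP (fun j : 'I_N => 0 < alpha j)%N) => [j hj|h0]; last first.
  have ha : alpha = 0%MM by apply/mnmP => i; rewrite mnm0E; have := h0 i; rewrite /=; lia.
  subst alpha; rewrite /deriv_eval mderivm0m; apply: base_case => //.
  have w0 : wt (0%MM : 'X_{1..N}) = 0%N by rewrite /wt big1 // => i _; rewrite mnm0E muln0.
  by move: hb; rewrite w0 addr0.
set alpha' := (alpha - U_(j))%MM.
have ea : alpha = (U_(j) + alpha')%MM.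
  rewrite mpoly.addmC submK //; apply/mnm_lepP => i; rewrite mnm1E.
  by case: eqP => [<-|] //.
have hdeg' : (mdeg alpha' <= n)%N by move: hdeg; rewrite ea mdegD mdeg1.
have hwt : wt alpha = (j.+1 + wt alpha')%N by rewrite ea wtD wtU.
rewrite /deriv_eval ea mderivmDm mderivmU1m mderiv_Gm !raddf_sum /=.
apply: big1 => i _; apply: IH => //.
  move=> i'; rewrite /shift; case: eqP => _; have := hca i'; lia.
rewrite shift_sum; move: hb; rewrite hwt; lia.
Qed.

End Main.

End MB3.
Import MB3.

Module MB4.
Import Order.TTheory GRing.Theory Num.Theory.
Local Close Scope ring_scope.
Set Implicit Arguments.
Unset Strict Implicit.
Unset Printing Implicit Defensive.

Lemma sumn_drop_nth (s : seq nat) k L : (size s <= L)%N ->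
  sumn (drop k s) = \sum_(k <= i < L) nth 0 s i.
Proof.
elim: s k L => [|x s IH] k L /=.
  by move=> _; rewrite big1 // => i _; rewrite nth_nil.
case: L => // L; rewrite ltnS => sL.
case: k => [|k].
  by rewrite drop0 /= big_nat_recl //= -(IH 0) ?drop0.
by rewrite /= big_add1 /= (IH k L sL).
Qed.

Lemma nth_le_sumn (s : seq nat) i : (nth 0 s i <= sumn s)%N.
Proof.
elim: s i => [|x s IH] [|i] //=; first exact: leq_addr.
by apply: leq_trans (IH i) _; apply: leq_addl.
Qed.

Lemma size_le_sumn (s : seq nat) : all (fun x => 0 < x)%N s -> (size s <= sumn s)%N.
Proof. by elim: s => //= x s IH /andP [x0 /IH]; lia. Qed.

Lemma sumn_filter_pos (s : seq nat) : sumn [seq x <- s | (0 < x)%N] = sumn s.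
Proof. by elim: s => //= x s IH; case: x => //= x; rewrite IH. Qed.

End MB4.
Import MB4.

Module MB5.
Import Order.TTheory GRing.Theory Num.Theory.
Local Close Scope ring_scope.
Set Implicit Arguments.
Unset Strict Implicit.
Unset Printing Implicit Defensive.

Lemma geq_trans : transitive geq.
Proof. by move=> y x z h1 h2; apply: leq_trans h2 h1. Qed.

Lemma per_mu (C : numFieldType) (lam : seq nat) k D N (alpha : 'X_{1..N}) (mu : seq nat) :
  is_partition lam -> (k < size lam)%N -> (D + D <= N)%N -> (wt alpha < Nlk lam k)%N ->
  sorted geq mu -> sumn mu = D -> all (fun x => 0 < x)%N mu -> part_le lam mu ->
  deriv_eval k alpha (schur C N mu) = 0%R.
Proof.
move=> /andP [_ lpos] hk hDN hwt smu hsum mpos hle.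
set l := size mu.
have hmu : forall i j, (i <= j)%N -> (nth 0 mu j <= nth 0 mu i)%N.
  move=> i j ij; case: (ltnP j l) => jl.
    apply: (sorted_leq_nth geq_trans (@leqnn) 0 smu) => //; rewrite inE //.
    by apply: leq_ltn_trans ij jl.
  by rewrite nth_default.
have hlam_le : forall i, (i < size lam)%N -> (nth 0 lam i <= nth 0 mu i)%N.
  by move=> i hi; move/allP: hle; apply; rewrite mem_iota.
have sl : (size lam <= l)%N.
  rewrite leqNgt; apply/negP => hl.
  have := hlam_le l hl; rewrite [nth 0 mu l]nth_default // leqn0.
  move/allP: lpos => /(_ (nth 0 lam l)); rewrite mem_nth // => /(_ isT) /= pos /eqP; lia.
have kl : (k <= l)%N by lia.
have hbound : forall i, (i < l)%N -> (nth 0 mu i + l <= N.+1)%N.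
  move=> i _; have := nth_le_sumn mu i; have := size_le_sumn mpos; rewrite /l; lia.
have hN : (Nlk lam k <= \sum_(k <= i < l) nth 0 mu i)%N.
  rewrite /Nlk (sumn_drop_nth k sl); apply: leq_sum => i _.
  case: (ltnP i (size lam)) => hi; first exact: hlam_le.
  by rewrite nth_default.
have -> : schur C N mu = Gm C N l (fun i => ((nth 0 mu i)%:Z - i%:Z)%R) by [].

apply: (@main_claim C N k l (nth 0 mu) kl hmu hbound (mdeg alpha) alpha (leqnn _)) => //.
rewrite big1 ?add0r; last by move=> i _; rewrite GRing.subrr.
rewrite ltz_nat; lia.
Qed.


End MB5.
Import MB5.

Local Open Scope ring_scope.
(* The formal series
   d^alpha tau (sum [x_i]) vanishes iff each of its homogeneous
   components vanishes; the component of x-degree D - wt alpha comes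
   exactly from the degree-D part of tau (partitions mu of D), which is
   computed with N >= 2D time variables (enough for all p_m used). *)
Theorem proposition3p1 (R : realType) (lam : seq nat) (xi : seq nat -> R[i])
    (k : nat) :
  is_partition lam -> (k < size lam)%N ->
  forall (D N : nat), (D + D <= N)%N ->
  forall alpha : 'X_{1..N}, (wt alpha < Nlk lam k)%N ->
  deriv_eval k alpha (tau_part lam xi N D) = 0.
Proof.
move=> hlam hk D N hDN alpha hwt.
rewrite /deriv_eval /tau_part !raddf_sum /=.
apply: big1 => m /andP [hpad hle].
rewrite mderivmZ comp_mpolyZ.
have -> : (schur R[i] N (strip m))^`M[alpha] \mPo miwa_pt R[i] N k = 0.
  apply: (@per_mu R[i] lam k D N alpha (strip m) hlam hk hDN hwt) => //.
  - move: hpad => /andP [hs _]; rewrite /strip -filter_map.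
    by apply: sorted_filter => //; exact: geq_trans.
  - move: hpad => /andP [_ /eqP hs]; rewrite /strip -filter_map sumn_filter_pos.
    exact: hs.
  - by rewrite /strip -filter_map; apply/allP => x; rewrite mem_filter => /andP [].
by rewrite scaler0.
Qed.
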